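(* The poset $(P_1,\le)$ is directed: any two elements of $P_1$ have a common upper bound in $P_1$. Consequently its geometric realization $|P_1|$ is contractible.
   Context: Let $\mathfrak C=\{0,1\}^{\omega}$, $S$ a nonempty set, $G$ a subgroup of the symmetric group of $S$, and $\mathfrak C^S$ the space of functions $S\to\mathfrak C$. For $\psi\colon S\to\{0,1\}^*$ with $\psi(s)=\varnothing$ for all but finitely many $s$, the dyadic brick $B(\psi)$ is the set of $\kappa\in\mathfrak C^S$ with $\psi(s)$ a prefix of $\kappa(s)$ for all $s$; $\Phi_\psi(\kappa)(s)=\psi(s)\cdot\kappa(s)$ is the canonical homeomorphism $\mathfrak C^S\to B(\psi)$; for $\gamma\in G$, $\tau_\gamma(\kappa)(s)=\kappa(\gamma^{-1}s)$, and the twist homeomorphism $B(\varphi)\to B(\psi)$ associated to $\gamma$ is $\Phi_\psi\tau_\gamma\Phi_\varphi^{-1}$. For $m\ge1$, let $\mathfrak C^S(m)=\mathfrak C^S_1\sqcup\dots\sqcup\mathfrak C^S_m$ be a disjoint union of $m$ copies of $\mathfrak C^S$, with $\mathfrak C^S(1)=\mathfrak C^S$. A dyadic brick in $\mathfrak C^S(m)$ is a dyadic brick in one of the cubes; canonical and twist homeomorphisms between bricks in possibly different cubes are defined via the identifications of each cube with $\mathfrak C^S$. $S\mathcal V_G$ is the set of homeomorphisms $h\colon\mathfrak C^S(m)\to\mathfrak C^S(n)$ ($m,n\ge1$) for which there are partitions of $\mathfrak C^S(m)$ and $\mathfrak C^S(n)$ into the same number of dyadic bricks $B_i$, $B_i'$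 and $\gamma_i\in G$ such that $h$ maps each $B_i$ to $B_i'$ by the twist homeomorphism associated to $\gamma_i$; $n$ is the rank and $m$ the corank of $h$. The direct sum $h\oplus h'$ places $h$ on the first cubes and $h'$ on the remaining cubes of domain and range. For $\sigma\in\Sigma_n$, $p_\sigma$ maps each $\mathfrak C^S_i$ to $\mathfrak C^S_{\sigma(i)}$ by the identity identification; a twisted permutation of $\mathfrak C^S(n)$ is $(\tau_{\gamma_1}\oplus\dots\oplus\tau_{\gamma_n})p_\sigma$, and these form a group $\mathcal G(n)\cong G\wr\Sigma_n$. A very elementary expansion of a partition $\mathcal P$ of $\mathfrak C^S(m)$ into dyadic bricks is a partition $\mathcal P'$ into dyadic bricks such that every brick of $\mathcal P$ is a union of at most two bricks of $\mathcal P'$; a dyadic partition of $\mathfrak C^S(m)$ is one obtained from $\{\mathfrak C^S_1,\dots,\mathfrak C^S_m\}$ by finitely many very elementary expansions. A multicolored forest is a homeomorphism $f\colon\mathfrak C^S(m)\to\mathfrak C^S(n)$ mapping the bricks $B_1,\dots,B_n$ of some dyadic partition of $\mathfrak C^S(m)$ onto $\mathfrak C^S_1,\dots,\mathfrak C^S_n$ respectively by canonical homeomorphisms. For $h\in S\mathcal V_G$ of rank $n$ write $[h]=\mathcal G(n)h$, and let $P$ be the set of all such classes (rank and corank are well defined on $P$). For $v,w\in P$, $v\le w$ means there exist $h\in S\mathcal V_G$ and a multicolored forest $f$ with $v=[h]$ and $w=[fh]$; this is a partial order. $P_1\subseteq P$ is the set of classes of corank $1$. *)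

(* Defs.v *)
From mathcomp Require Import all_boot all_fingroup.
From Stdlib Require List.
Set Implicit Arguments. Unset Strict Implicit. Unset Printing Implicit Defensive.

Definition Cantor := nat -> bool.

Definition subgroup_sym (S : Type) (G : (S -> S) -> Prop) : Prop :=
  [/\ (forall g, G g -> bijective g),
      G id,
      (forall g h, G g -> G h -> G (g \o h)) &
      (forall g, G g -> exists g', [/\ G g', cancel g g' & cancel g' g])].

(* C^S(m) = disjoint union of m copies of C^S *)
Definition cube (S : Type) (m : nat) : Type := ('I_m * (S -> Cantor))%type.

Definition finsupp (S : Type) (psi : S -> seq bool) : Prop :=
  exists l : list S, forall s, psi s <> [::] -> List.In s l.

(* a dyadic brick of C^S(m): cube index and psi *)
Definition brick (S : Type) (m : nat) : Type := ('I_m * (S -> seq bool))%type.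

Definition dyadic_brick (S : Type) (m : nat) (b : brick S m) : Prop :=
  finsupp b.2.

Definition prefix_of (w : seq bool) (c : Cantor) : Prop :=
  forall k, k < size w -> c k = nth false w k.

Definition in_brick (S : Type) (m : nat) (b : brick S m) (x : cube S m) : Prop :=
  x.1 = b.1 /\ forall s, prefix_of (b.2 s) (x.2 s).

Definition wcat (w : seq bool) (c : Cantor) : Cantor :=
  fun k => if k < size w then nth false w k else c (k - size w).

Definition Phi (S : Type) (psi : S -> seq bool) (k : S -> Cantor) : S -> Cantor :=
  fun s => wcat (psi s) (k s).

(* k' = tau_gamma k, i.e. k'(s) = k(gamma^{-1} s), equivalently k'(gamma s) = k s *)
Definition is_twist (S : Type) (gamma : S -> S) (k k' : S -> Cantor) : Prop :=
  forall s, k' (gamma s) = k s.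

Definition brick_partition (S : Type) (m k : nat) (B : 'I_k -> brick S m) : Prop :=
  (forall j, dyadic_brick (B j)) /\
  forall x : cube S m, exists! j, in_brick (B j) x.

Definition very_elem_exp (S : Type) (m k k' : nat)
    (P : 'I_k -> brick S m) (P' : 'I_k' -> brick S m) : Prop :=
  brick_partition P' /\
  forall j, exists j1 j2, forall x, in_brick (P j) x <-> (in_brick (P' j1) x \/ in_brick (P' j2) x).

Definition initial_partition (S : Type) (m : nat) : 'I_m -> brick S m :=
  fun i => (i, fun _ => [::]).

Inductive dyadic_partition (S : Type) (m : nat) : forall k, ('I_k -> brick S m) -> Prop :=
  | dp_init : dyadic_partition (@initial_partition S m)
  | dp_step : forall k k' (P : 'I_k -> brick S m) (P' : 'I_k' -> brick S m),
      dyadic_partition P -> very_elem_exp P P' -> dyadic_partition P'.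

(* the set S V_G of elements of rank n and corank m *)
Definition SV (S : Type) (G : (S -> S) -> Prop) (m n : nat) (h : cube S m -> cube S n) : Prop :=
  [/\ 0 < m, 0 < n, bijective h &
   exists k (B : 'I_k -> brick S m) (B' : 'I_k -> brick S n) (gam : 'I_k -> S -> S),
     [/\ brick_partition B, brick_partition B', (forall j, G (gam j)) &
       forall j kap kap', is_twist (gam j) kap kap' ->
         h ((B j).1, Phi (B j).2 kap) = ((B' j).1, Phi (B' j).2 kap')]].

Definition forest (S : Type) (m n : nat) (f : cube S m -> cube S n) : Prop :=
  bijective f /\
  exists B : 'I_n -> brick S m, dyadic_partition B /\
    forall j kap, f ((B j).1, Phi (B j).2 kap) = (j, kap).

Definition twisted_perm (S : Type) (G : (S -> S) -> Prop) (n : nat) (g : cube S n -> cube S n) : Prop :=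
  exists (sigma : {perm 'I_n}) (gam : 'I_n -> S -> S),
    (forall i, G (gam i)) /\
    forall i kap kap', is_twist (gam (sigma i)) kap kap' -> g (i, kap) = (sigma i, kap').

Definition same_class (S : Type) (G : (S -> S) -> Prop) (m n : nat) (h h0 : cube S m -> cube S n) : Prop :=
  exists g, twisted_perm G g /\ forall x, h x = g (h0 x).

Definition Ple (S : Type) (G : (S -> S) -> Prop) (m n n' : nat)
    (h : cube S m -> cube S n) (h' : cube S m -> cube S n') : Prop :=
  exists (h0 : cube S m -> cube S n) (f : cube S n -> cube S n'),
    [/\ SV G h0, forest f, same_class G h h0 & same_class G h' (f \o h0)].

(* Main.v *)
Require Import Defs.
From mathcomp Require Import all_boot all_fingroup.
From mathcomp Require Import zify.
From Stdlib Require Import ClassicalEpsilon FunctionalExtensionality Classical.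
Set Implicit Arguments. Unset Strict Implicit. Unset Printing Implicit Defensive.

Definition pb (P : Prop) : bool := if excluded_middle_informative P then true else false.
Lemma pbP P : reflect P (pb P).
Proof. rewrite /pb; case: excluded_middle_informative => H; [exact: ReflectT|exact: ReflectF]. Qed.
Lemma pbT (P : Prop) : P -> pb P = true. Proof. by move=> H; apply/pbP. Qed.
Lemma pbF (P : Prop) : ~ P -> pb P = false. Proof. by move=> H; apply/pbP. Qed.

Lemma choice' A B (P : A -> B -> Prop) : (forall a, exists b, P a b) -> exists f, forall a, P a (f a).
Proof. move=> H; exists (fun a => proj1_sig (constructive_indefinite_description _ (H a))).
by move=> a; case: constructive_indefinite_description. Qed.

Lemma pref_wcat w c : prefix_of w (wcat w c).
Proof. by move=> k hk; rewrite /wcat hk. Qed.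

Lemma wcat_nil c : wcat [::] c = c.
Proof. by apply: functional_extensionality => k; rewrite /wcat /= subn0. Qed.

Lemma wcat_cat u w c : wcat (u ++ w) c = wcat u (wcat w c).
Proof.
apply: functional_extensionality => k; rewrite /wcat size_cat nth_cat.
case: (ltnP k (size u)) => h1.
  by have -> : k < size u + size w by lia.
case: (ltnP k (size u + size w)) => h2.
  by have -> : k - size u < size w by lia.
have -> : (k - size u < size w) = false by lia.
by rewrite subnDA.
Qed.

Lemma pref_cat u w c : prefix_of (u ++ w) c <-> prefix_of u c /\ prefix_of w (fun k => c (size u + k)).
Proof.
split.
  move=> H; split.
    by move=> k hk; rewrite H ?size_cat ?nth_cat ?hk //; lia.
  move=> k hk; rewrite H; last by rewrite size_cat; lia.
  by rewrite nth_cat ltnNge leq_addr /= addKn.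
move=> [H1 H2] k; rewrite size_cat nth_cat => hk.
case: (ltnP k (size u)) => h; first by rewrite H1.
by have := H2 (k - size u); rewrite subnKC // => ->; lia.
Qed.

Lemma pref_take u v c : prefix_of u c -> prefix_of v c -> size u <= size v -> u = take (size u) v.
Proof.
move=> Hu Hv hs; apply: (@eq_from_nth _ false); first by rewrite size_takel.
move=> k hk; rewrite nth_take // -Hu // Hv //; lia.
Qed.

Lemma unwcat u c : prefix_of u c -> wcat u (fun k => c (k + size u)) = c.
Proof.
move=> H; apply: functional_extensionality => k; rewrite /wcat.
case: ltnP => h; first by rewrite H.
by rewrite subnK.
Qed.

Lemma wcat_shift u c : (fun k => wcat u c (k + size u)) = c.
Proof.
apply: functional_extensionality => k; rewrite /wcat.
have -> : (k + size u < size u) = false by lia.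
by rewrite addnK.
Qed.

Section Bricks.
Variable S : Type.

Definition relext m (b : brick S m) (z : S -> seq bool) : brick S m := (b.1, fun s => b.2 s ++ z s).
Definition point_of m (b : brick S m) : cube S m := (b.1, Phi b.2 (fun _ _ => false)).

Lemma in_Phi m (b : brick S m) kap : in_brick b (b.1, Phi b.2 kap).
Proof. by split => // s; apply: pref_wcat. Qed.

Lemma in_point m (b : brick S m) : in_brick b (point_of b).
Proof. exact: in_Phi. Qed.

Lemma in_brick_Phi m (b : brick S m) x : in_brick b x <-> exists kap, x = (b.1, Phi b.2 kap).
Proof.
split; last by move=> [kap ->]; apply: in_Phi.
case: x => c y [/= -> H].
exists (fun s k => y s (k + size (b.2 s))); congr pair.
by apply: functional_extensionality => s; rewrite /Phi unwcat.
Qed.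

Lemma Phi_relext m (b : brick S m) z kap : Phi (relext b z).2 kap = Phi b.2 (Phi z kap).
Proof. by apply: functional_extensionality => s; rewrite /Phi /= wcat_cat. Qed.

Lemma in_relext m (b : brick S m) z x : in_brick (relext b z) x <->
  in_brick b x /\ forall s, prefix_of (z s) (fun k => x.2 s (size (b.2 s) + k)).
Proof.
rewrite /in_brick /=; split.
  by move=> [-> H]; split; [split=> // s|move=> s]; have /pref_cat [] := H s.
by move=> [[-> H1] H2]; split=> // s; apply/pref_cat.
Qed.

Lemma in_relext_in m (b : brick S m) z x : in_brick (relext b z) x -> in_brick b x.
Proof. by move/in_relext=> []. Qed.

Lemma relext_relext m (b : brick S m) z w : relext (relext b z) w = relext b (fun s => z s ++ w s).
Proof. rewrite /relext /=; congr pair; apply: functional_extensionality => s; by rewrite catA. Qed.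

Lemma relext_nil m (b : brick S m) : relext b (fun _ => [::]) = b.
Proof. case: b => c p; rewrite /relext /=; congr pair; apply: functional_extensionality => s; exact: cats0. Qed.

Lemma size_relext m (b : brick S m) z s : size ((relext b z).2 s) = size (b.2 s) + size (z s).
Proof. by rewrite size_cat. Qed.

Lemma Gref m (b v : brick S m) x : in_brick b x -> in_brick v x ->
  (forall s, size (b.2 s) <= size (v.2 s)) -> v = relext b (fun s => drop (size (b.2 s)) (v.2 s)).
Proof.
case: v => c v [Hb1 Hb2] [/= Hv1 Hv2] Hs; rewrite /relext; congr pair; first by rewrite -Hv1.
apply: functional_extensionality => s /=.
by rewrite {1}(pref_take (Hb2 s) (Hv2 s) (Hs s)) cat_take_drop.
Qed.

Definition bhalf (bit : bool) (s0 : S) m (b : brick S m) : brick S m :=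
  relext b (fun s => if pb (s0 = s) then [:: bit] else [::]).

Lemma in_bhalf bit s0 m (b : brick S m) x :
  in_brick (bhalf bit s0 b) x <-> in_brick b x /\ x.2 s0 (size (b.2 s0)) = bit.
Proof.
rewrite in_relext; split.
  move=> [H1 H2]; split=> //; have := H2 s0; rewrite pbT // => H; by move: (H 0 isT); rewrite addn0.
move=> [H1 H2]; split=> // s; case: (pbP (s0 = s)) => [<-|_] k //=.
by rewrite ltnS leqn0 => /eqP ->; rewrite addn0.
Qed.

Lemma pb_bhalf s0 m (b : brick S m) x :
  pb (in_brick (bhalf false s0 b) x) + pb (in_brick (bhalf true s0 b) x) = pb (in_brick b x).
Proof.
case: (pbP (in_brick b x)) => H.
  case E : (x.2 s0 (size (b.2 s0))).
    by rewrite (pbF (P := in_brick (bhalf false s0 b) x)) ?(pbT (P := in_brick (bhalf true s0 b) x)) ?in_bhalf ?E //; case=> _.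
  by rewrite (pbT (P := in_brick (bhalf false s0 b) x)) ?(pbF (P := in_brick (bhalf true s0 b) x)) ?in_bhalf ?E //; case=> _.
by rewrite !pbF // => /in_bhalf [].
Qed.

Definition nb m (l : seq (brick S m)) x := count (fun b => pb (in_brick b x)) l.
Definition lpart m (l : seq (brick S m)) := forall x, nb l x = 1.
Definition lfin m (l : seq (brick S m)) := forall b, List.In b l -> finsupp b.2.

End Bricks.

Lemma In_nth T (x0 : T) b l : List.In b l -> exists2 i, i < size l & nth x0 l i = b.
Proof.
elim: l => //= a l IH [->|H]; first by exists 0.
by have [i hi <-] := IH H; exists i.+1.
Qed.

Lemma nth_In T (x0 : T) l i : i < size l -> List.In (nth x0 l i) l.
Proof. elim: l i => //= a l IH [|i] /= hi; [by left|right; exact: IH]. Qed.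

Lemma count1_ex T (a : pred T) l x0 : 0 < count a l -> exists2 i, i < size l & a (nth x0 l i).
Proof. by rewrite -has_count => /(has_nthP x0) [i hi ha]; exists i. Qed.

Lemma count1_uniq T (a : pred T) l x0 i j : count a l <= 1 -> i < size l -> j < size l ->
  a (nth x0 l i) -> a (nth x0 l j) -> i = j.
Proof.
elim: l i j => //= b l IH [|i] [|j] //= hc hi hj.
- move=> hb ha; exfalso; rewrite hb in hc.
  have : 0 < count a l by rewrite -has_count; apply/(has_nthP x0); exists j.
  lia.
- move=> ha hb; exfalso; rewrite hb in hc.
  have : 0 < count a l by rewrite -has_count; apply/(has_nthP x0); exists i.
  lia.
- move=> h1 h2; congr S; apply: (IH i j) => //; lia.
Qed.

Section Parts.
Variable S : Type.

Lemma lpart_ex m (l : seq (brick S m)) x : lpart l -> exists2 b, List.In b l & in_brick b x.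
Proof.
move=> H; case: l H => [|b0 l] H; first by have := H x.
have [|i hi /pbP hin] := count1_ex b0 (a := fun b => pb (in_brick b x)) (l := b0 :: l).
  by change (0 < nb (b0 :: l) x); rewrite H.
by exists (nth b0 (b0 :: l) i) => //; apply: nth_In.
Qed.

Lemma lpart_uniq m (l : seq (brick S m)) b0 x i j : lpart l -> i < size l -> j < size l ->
  in_brick (nth b0 l i) x -> in_brick (nth b0 l j) x -> i = j.
Proof.
move=> H hi hj h1 h2; apply: (count1_uniq (a := fun b => pb (in_brick b x)) (l := l) (x0 := b0)) => //.
- by have E := H x; rewrite /nb in E; rewrite E.
- exact/pbP.
- exact/pbP.
Qed.

Lemma lpart_uniqb m (l : seq (brick S m)) x b b' : lpart l -> List.In b l -> List.In b' l ->
  in_brick b x -> in_brick b' x -> b = b'.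
Proof.
move=> H hb hb' h1 h2.
have [i hi ei] := In_nth b hb; have [j hj ej] := In_nth b hb'.
rewrite -ei -ej in h1 h2 *; by rewrite (lpart_uniq H hi hj h1 h2).
Qed.

Lemma Bpart m (l : seq (brick S m)) b0 k : lpart l -> lfin l -> size l = k ->
  brick_partition (fun i : 'I_k => nth b0 l i).
Proof.
move=> Hp Hf Hs; split.
  by move=> j; apply: Hf; apply: nth_In; rewrite Hs.
move=> x; case: l Hp Hf Hs => [|c l] Hp Hf Hs; first by have := Hp x.
have [|i hi hin] := count1_ex c (a := fun b => pb (in_brick b x)) (l := c :: l).
  by change (0 < nb (c :: l) x); rewrite Hp.
have hik : i < k by rewrite -Hs.
have hb0 : nth b0 (c :: l) i = nth c (c :: l) i by apply: set_nth_default.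
exists (Ordinal hik); split; first by rewrite /= hb0; apply/pbP.
move=> j hj; apply: val_inj => /=.
have hj' : j < size (c :: l) by rewrite Hs.
apply/esym; apply: (lpart_uniq (b0 := b0) Hp hj' hi hj).
by rewrite hb0; apply/pbP.
Qed.

Lemma Dstep_gen m k (P : 'I_k -> brick S m) (l : seq (brick S m)) b0 k' :
  dyadic_partition P -> lpart l -> lfin l -> size l = k' ->
  (forall j, exists b1 b2, [/\ List.In b1 l, List.In b2 l &
      forall x, in_brick (P j) x <-> (in_brick b1 x \/ in_brick b2 x)]) ->
  dyadic_partition (fun i : 'I_k' => nth b0 l i).
Proof.
move=> HP Hp Hf Hs H; apply: (dp_step HP); split; first exact: Bpart.
move=> j; have [b1 [b2 [h1 h2 h3]]] := H j.
have [i1 hi1 e1] := In_nth b0 h1; have [i2 hi2 e2] := In_nth b0 h2.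
rewrite Hs in hi1 hi2.
by exists (Ordinal hi1), (Ordinal hi2) => x /=; rewrite e1 e2.
Qed.

End Parts.

Section Glue.
Variable S : Type.

Lemma nb_cat m (l1 l2 : seq (brick S m)) x : nb (l1 ++ l2) x = nb l1 x + nb l2 x.
Proof. exact: count_cat. Qed.

Lemma finsupp_relext m (b : brick S m) z : finsupp b.2 -> finsupp z -> finsupp (relext b z).2.
Proof.
move=> [T1 H1] [T2 H2]; exists (T1 ++ T2) => s /= hs; apply: List.in_or_app.
case E : (b.2 s) => [|a l]; last by left; apply: H1; rewrite E.
by right; apply: H2; move: hs; rewrite E.
Qed.

Lemma finsupp_bhalf bit s0 m (b : brick S m) : finsupp b.2 -> finsupp (bhalf bit s0 b).2.
Proof.
move=> H; apply: finsupp_relext => //; exists [:: s0] => s.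
by case: (pbP (s0 = s)) => // <- _; left.
Qed.

Lemma in_split_or m (l1 l2 : seq (brick S m)) p b :
  List.In b (l1 ++ p :: l2) -> [\/ List.In b l1, b = p | List.In b l2].
Proof.
move=> H0; case: (List.in_app_or _ _ _ H0) => [H|[H|H]]; [exact: Or31|exact: Or32 (esym H)|exact: Or33].
Qed.

Lemma in_split2 m (l1 l2 : seq (brick S m)) a c b :
  List.In b (l1 ++ a :: c :: l2) -> [\/ List.In b l1, b = a, b = c | List.In b l2].
Proof.
move=> H0; case: (List.in_app_or _ _ _ H0) => [H|[H|[H|H]]]; [exact: Or41|exact: Or42 (esym H)|exact: Or43 (esym H)|exact: Or44].
Qed.

Lemma In_l1 m (l1 l : seq (brick S m)) b : List.In b l1 -> List.In b (l1 ++ l).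
Proof. by move=> H; apply: List.in_or_app; left. Qed.
Lemma In_l2 m (l2 l : seq (brick S m)) b : List.In b l2 -> List.In b (l ++ l2).
Proof. by move=> H; apply: List.in_or_app; right. Qed.
Lemma In_m1 m (l1 l : seq (brick S m)) a : List.In a (l1 ++ a :: l).
Proof. by apply: In_l2; left. Qed.
Lemma In_m2 m (l1 l : seq (brick S m)) a c : List.In c (l1 ++ a :: c :: l).
Proof. by apply: In_l2; right; left. Qed.
Lemma In_m3 m (l1 l : seq (brick S m)) a c b : List.In b l -> List.In b (l1 ++ a :: c :: l).
Proof. by move=> H; apply: In_l2; right; right. Qed.
Lemma In_m4 m (l1 l : seq (brick S m)) a b : List.In b l -> List.In b (l1 ++ a :: l).
Proof. by move=> H; apply: In_l2; right. Qed.

Lemma Lcount m (P R : seq (brick S m)) : lpart P -> lpart R ->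
  (forall r, List.In r R -> exists2 p, List.In p P & forall x, in_brick r x -> in_brick p x) ->
  size P <= size R.
Proof.
case: P => [|b0 P'] // HP HR Hsub; set P := b0 :: P' in HP Hsub *.
have H : forall i : 'I_(size P), exists j : 'I_(size R), in_brick (nth b0 R j) (point_of (nth b0 P i)).
  move=> i; have [r hr hin] := lpart_ex (point_of (nth b0 P i)) HR.
  have [j hj ej] := In_nth b0 hr; exists (Ordinal hj); by rewrite /= ej.
have [f Hf] := choice' H.
have : injective f.
  move=> i1 i2 e; have := Hf i1; have := Hf i2; rewrite e => h2 h1.
  have [p hp Hp] := Hsub _ (nth_In b0 (ltn_ord (f i2))).
  have [i hi ei] := In_nth b0 hp.
  have e1 : val i1 = i.
    apply: (lpart_uniq (b0 := b0) HP (ltn_ord i1) hi); first exact: in_point.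
    by rewrite ei; apply: Hp.
  have e2 : val i2 = i.
    apply: (lpart_uniq (b0 := b0) HP (ltn_ord i2) hi); first exact: in_point.
    by rewrite ei; apply: Hp.
  by apply: val_inj; rewrite e1 e2.
by move/leq_card; rewrite !card_ord.
Qed.

Definition Hrel m (R P : seq (brick S m)) :=
  forall r, List.In r R -> exists p w, List.In p P /\ r = relext p w.
Definition Huni m (R P : seq (brick S m)) :=
  forall p r r' w w', List.In p P -> List.In r R -> List.In r' R -> r = relext p w -> r' = relext p w' ->
    forall s, size (w s) = size (w' s).

Definition ginv m b0 (R P : seq (brick S m)) :=
  [/\ dyadic_partition (fun i : 'I_(size P) => nth b0 P i), lpart P, lfin P, Hrel R P & Huni R P].

Lemma glue_base m b0 (R P : seq (brick S m)) : lpart R -> lfin R -> ginv b0 R P ->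
  ~ (exists r p w s, [/\ List.In r R, List.In p P, r = relext p w & w s <> [::]]) ->
  dyadic_partition (fun i : 'I_(size R) => nth b0 R i).
Proof.
move=> HR HfR [HdP HP HfP Hr Hu] Hno.
apply: (Dstep_gen b0 HdP HR HfR (erefl _)) => j.
set b := nth b0 P j.
have hb : List.In b P by apply: nth_In.
suff : List.In b R by move=> H; exists b, b; split => // x; split; [left|case].
have [r hr hin] := lpart_ex (point_of b) HR.
have [p [w [hp er]]] := Hr r hr.
have ew : w = fun _ => [::].
  apply: functional_extensionality => s; apply: NNPP => hs; apply: Hno.
  by exists r, p, w, s.
rewrite ew relext_nil in er; subst r.
by rewrite (lpart_uniqb HP hb hp (in_point b) hin).
Qed.

Lemma glue_step m b0 (R P : seq (brick S m)) : lpart R -> lfin R -> ginv b0 R P ->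
  (exists r p w s, [/\ List.In r R, List.In p P, r = relext p w & w s <> [::]]) ->
  exists P', size P' = (size P).+1 /\ ginv b0 R P'.
Proof.
move=> HR HfR [HdP HP HfP Hr Hu] [r0 [p0 [w0 [s0 [hr0 hp0 er0 hw0]]]]].
have [l1 [l2 eP0]] := List.in_split p0 P hp0.
have eP : P = (l1 ++ p0 :: l2)%SEQ by rewrite eP0; clear; elim: l1 => //= a l ->.
set h0 := bhalf false s0 p0; set h1 := bhalf true s0 p0.
exists (l1 ++ h0 :: h1 :: l2); split.
  by rewrite eP !size_cat /=; lia.
have HP' : lpart (l1 ++ h0 :: h1 :: l2).
  move=> x; have := HP x; rewrite eP !nb_cat /nb /= -(pb_bhalf s0 p0 x); rewrite /h0 /h1; lia.
have HfP' : lfin (l1 ++ h0 :: h1 :: l2).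
  move=> b /in_split2 [] H.
  - by apply: HfP; rewrite eP; apply: In_l1.
  - by rewrite H; apply: finsupp_bhalf; apply: HfP.
  - by rewrite H; apply: finsupp_bhalf; apply: HfP.
  - by apply: HfP; rewrite eP; apply: In_m4.
split => //.
- apply: (Dstep_gen b0 HdP HP' HfP' (erefl _)) => j.
  have : List.In (nth b0 P j) (l1 ++ p0 :: l2) by rewrite -eP; apply: nth_In.
  move=> /in_split_or [] H.
  + by exists (nth b0 P j), (nth b0 P j); split; [apply: In_l1|apply: In_l1|move=> x; split; [left|case]].
  + exists h0, h1; split; [exact: In_m1|exact: In_m2|].
    move=> x; rewrite H !in_bhalf.
    by split; [case=> H1 H2; case E : (x.2 s0 (size (p0.2 s0))); [right|left]|case; case].
  + exists (nth b0 P j), (nth b0 P j); split; [exact: In_m3|exact: In_m3|].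
    by move=> x; split; [left|case].
- move=> r hr; have [p [w [hp er]]] := Hr r hr.
  case: (classic (p = p0)) => [ep|np].
    subst p; have := Hu p0 r0 r w0 w hp0 hr0 hr er0 er s0.
    case E : (w s0) => [|bit t]; first by case: (w0 s0) hw0.
    move=> _; exists (bhalf bit s0 p0), (fun s => if pb (s0 = s) then behead (w s) else w s); split.
      by case: bit E => _; [exact: In_m2|exact: In_m1].
    rewrite er relext_relext; congr relext; apply: functional_extensionality => s.
    by case: (pbP (s0 = s)) => // <-; rewrite E.
  exists p, w; split => //; move: hp; rewrite eP => /in_split_or [] H //.
  + exact: In_l1.
  + exact: In_m3.
- move=> p r r' w w' /in_split2 [] H hr hr' er er' s.
  + by apply: (Hu p r r') => //; rewrite eP; apply: In_l1.
  + rewrite H /h0 !relext_relext in er er'.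
    by have := Hu p0 r r' _ _ hp0 hr hr' er er' s; rewrite !size_cat => /addnI.
  + rewrite H /h1 !relext_relext in er er'.
    by have := Hu p0 r r' _ _ hp0 hr hr' er er' s; rewrite !size_cat => /addnI.
  + by apply: (Hu p r r') => //; rewrite eP; apply: In_m4.
Qed.

Lemma glue m b0 (R : seq (brick S m)) : lpart R -> lfin R -> forall n P,
  size R <= n + size P -> ginv b0 R P -> dyadic_partition (fun i : 'I_(size R) => nth b0 R i).
Proof.
move=> HR HfR n; elim: n => [|n IH] P hs HG.
  case: (classic (exists r p w s, [/\ List.In r R, List.In p P, r = relext p w & w s <> [::]])) => Hc.
    have [P' [sP' [_ HP' _ Hr' _]]] := glue_step HR HfR HG Hc.
    have := Lcount HP' HR; rewrite sP' => H; exfalso.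
    have : (size P).+1 <= size R.
      apply: H => r hr; have [p [w [hp er]]] := Hr' r hr.
      by exists p => // x; rewrite er => /in_relext_in.
    lia.
  exact: glue_base HG Hc.
case: (classic (exists r p w s, [/\ List.In r R, List.In p P, r = relext p w & w s <> [::]])) => Hc.
  have [P' [sP' HG']] := glue_step HR HfR HG Hc.
  by apply: (IH P') => //; lia.
exact: glue_base HG Hc.
Qed.

End Glue.

Lemma In_mem (T : eqType) (x : T) l : x \in l -> List.In x l.
Proof. elim: l => //= a l IH; rewrite in_cons => /orP [/eqP ->|H]; [by left|by right; apply: IH]. Qed.

Section Grid.
Variable S : Type.

Definition occ (cs : seq S) s := count (fun c => pb (c = s)) cs.

Lemma occ_cons c cs s : occ (c :: cs) s = pb (c = s) + occ cs s.
Proof. by []. Qed.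
Lemma occ_cat cs1 cs2 s : occ (cs1 ++ cs2) s = occ cs1 s + occ cs2 s.
Proof. exact: count_cat. Qed.
Lemma occ_size cs s : occ cs s <= size cs.
Proof. exact: count_size. Qed.
Lemma occ_In cs s : 0 < occ cs s -> List.In s cs.
Proof.
elim: cs => // c cs IH; rewrite occ_cons; case: (pbP (c = s)) => [->|_ H]; first by left.
by right; apply: IH.
Qed.
Lemma In_occ cs s : List.In s cs -> 0 < occ cs s.
Proof. elim: cs => // c cs IH [->|H]; rewrite occ_cons; first by rewrite pbT. by have := IH H; lia. Qed.
Lemma occ_nseq N T s : List.In s T -> N <= occ (flatten (nseq N T)) s.
Proof. move=> H; elim: N => //= N IH; rewrite occ_cat; have := In_occ H; lia. Qed.

Definition init m : seq (brick S m) := map (fun i => (i, fun _ => [::])) (enum 'I_m).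
Definition halve_all m s0 (l : seq (brick S m)) :=
  flatten (map (fun b => [:: bhalf false s0 b; bhalf true s0 b]) l).
Fixpoint gridL m (cs : seq S) : seq (brick S m) :=
  match cs with [::] => init m | s :: cs' => halve_all s (gridL m cs') end.

Lemma nb_halve m s0 (l : seq (brick S m)) x : nb (halve_all s0 l) x = nb l x.
Proof.
elim: l => // b l IH.
change (nb ([:: bhalf false s0 b; bhalf true s0 b] ++ halve_all s0 l) x = nb (b :: l) x).
rewrite nb_cat IH.
rewrite /nb /= -(pb_bhalf s0 b x); lia.
Qed.

Lemma In_halve m s0 (l : seq (brick S m)) v : List.In v (halve_all s0 l) ->
  exists bit b, List.In b l /\ v = bhalf bit s0 b.
Proof.
elim: l => //= b l IH [<-|[<-|H]].
- by exists false, b; split => //; left.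
- by exists true, b; split => //; left.
- by have [bit [b' [H1 H2]]] := IH H; exists bit, b'; split => //; right.
Qed.

Lemma In_init m (b : brick S m) : List.In b (init m) -> b = (b.1, fun _ => [::]).
Proof. by move=> H; case: (proj1 (List.in_map_iff _ _ _) H) => [i [<- _]]. Qed.

Lemma In_init2 m (i : 'I_m) : List.In (i, fun _ : S => [::]) (init m).
Proof. apply: List.in_map; apply: In_mem; exact: mem_enum. Qed.

Lemma lpart_init m : lpart (init m).
Proof.
move=> x; rewrite /nb /init count_map.
rewrite (eq_count (a2 := fun i => i == x.1)); last first.
  move=> i /=; apply/pbP/eqP; first by case.
  by move=> ->; split => // s k.
have := count_uniq_mem x.1 (enum_uniq 'I_m); rewrite mem_enum => E.
by rewrite -[RHS]/(nat_of_bool true) -E.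
Qed.

Lemma finsupp_nil : finsupp (fun _ : S => [::] : seq bool).
Proof. by exists [::]. Qed.

Lemma lfin_init m : lfin (init m).
Proof. by move=> b /In_init ->; exact: finsupp_nil. Qed.

Lemma grid_size m cs (v : brick S m) : List.In v (gridL m cs) -> forall s, size (v.2 s) = occ cs s.
Proof.
elim: cs v => [|c cs IH] v; first by move/In_init => -> s.
move/In_halve => [bit [b [hb ->]]] s; rewrite size_relext occ_cons IH //.
by case: (pbP (c = s)) => _ /=; lia.
Qed.

Lemma lpart_grid m cs : lpart (gridL m cs).
Proof. elim: cs => [|c cs IH] /=; first exact: lpart_init. by move=> x; rewrite nb_halve. Qed.

Lemma lfin_grid m cs : lfin (gridL m cs).
Proof.
move=> v hv; exists cs => s hs; apply: occ_In; rewrite -(grid_size hv).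
by case: (v.2 s) hs.
Qed.

Lemma init_dyadic m b0 : dyadic_partition (fun i : 'I_(size (init m)) => nth b0 (init m) i).
Proof.
apply: (Dstep_gen b0 (@dp_init S m) (lpart_init (m:=m)) (lfin_init (m:=m)) (erefl _)) => j.
by exists (j, fun _ => [::]), (j, fun _ => [::]); split; [exact: In_init2|exact: In_init2|move=> x; split; [left|case]].
Qed.

Lemma grid_dyadic m b0 cs : dyadic_partition (fun i : 'I_(size (gridL m cs)) => nth b0 (gridL m cs) i).
Proof.
refine (glue (b0 := b0) (@lpart_grid m cs) (@lfin_grid m cs) (n := size (gridL m cs)) (P := init m) _ _); first lia.
split.
- exact: init_dyadic.
- exact: lpart_init.
- exact: lfin_init.
- move=> r hr; exists (r.1, fun _ => [::]), r.2; split; first exact: In_init2.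
  by case: r {hr}.
- move=> p r r' w w' /In_init hp hr hr' er er' s.
  have e1 : size (w s) = occ cs s by rewrite -(grid_size hr) er hp.
  have e2 : size (w' s) = occ cs s by rewrite -(grid_size hr') er' hp.
  by rewrite e1 e2.
Qed.

End Grid.

Section Maps.
Variable S : Type.

Definition maps m n (h : cube S m -> cube S n) (b : brick S m) (b' : brick S n) (g : S -> S) :=
  forall kap kap', is_twist g kap kap' -> h (b.1, Phi b.2 kap) = (b'.1, Phi b'.2 kap').

Lemma maps_fwd m n (h : cube S m -> cube S n) b b' g gi : maps h b b' g -> cancel g gi ->
  forall x, in_brick b x -> in_brick b' (h x).
Proof.
move=> H c x /in_brick_Phi [kap ->].
rewrite (H kap (fun t => kap (gi t))); first exact: in_Phi.
by move=> s; rewrite /= c.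
Qed.

Lemma maps_bwd m n (h : cube S m -> cube S n) b b' g : injective h -> maps h b b' g ->
  forall x, in_brick b' (h x) -> in_brick b x.
Proof.
move=> hi H x /in_brick_Phi [kap' e].
have := H (fun s => kap' (g s)) kap' (fun s => erefl); rewrite -e => /hi <-.
exact: in_Phi.
Qed.

Lemma maps_relext m n (h : cube S m -> cube S n) b b' g gi z : maps h b b' g -> cancel g gi ->
  maps h (relext b z) (relext b' (fun t => z (gi t))) g.
Proof.
move=> H c kap kap' tw; rewrite !Phi_relext /=; apply: H => s.
by rewrite /Phi c tw.
Qed.

Lemma bp_ex m k (B : 'I_k -> brick S m) x : brick_partition B -> exists j, in_brick (B j) x.
Proof. by move=> [_ H]; have [j [hj _]] := H x; exists j. Qed.

Lemma bp_uniq m k (B : 'I_k -> brick S m) x j1 j2 : brick_partition B ->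
  in_brick (B j1) x -> in_brick (B j2) x -> j1 = j2.
Proof. by move=> [_ H] h1 h2; have [j [hj U]] := H x; rewrite -(U _ h1) -(U _ h2). Qed.

Lemma le_sumn (T : Type) (f : T -> nat) l s : List.In s l -> f s <= sumn (map f l).
Proof. elim: l => //= a l IH [->|H]; [lia|have := IH H; lia]. Qed.

Lemma fam_bound k (psi : 'I_k -> S -> seq bool) : (forall j, finsupp (psi j)) ->
  exists T N, forall j s, (psi j s <> [::] -> List.In s T) /\ size (psi j s) <= N.
Proof.
move=> H.
suff : forall js : seq 'I_k, exists T N, forall j, j \in js -> forall s,
    (psi j s <> [::] -> List.In s T) /\ size (psi j s) <= N.
  by move=> /(_ (enum 'I_k)) [T [N HT]]; exists T, N => j s; apply: HT; rewrite mem_enum.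
elim=> [|j js [T [N IH]]]; first by exists [::], 0.
have [Tj HTj] := H j.
exists (Tj ++ T), (sumn (map (fun t => size (psi j t)) Tj) + N) => j'; rewrite in_cons => /orP [/eqP ->|hj] s.
  split; first by move=> hs; apply: List.in_or_app; left; apply: HTj.
  case E : (psi j s) => [|a l]; first by [].
  have hs : psi j s <> [::] by rewrite E.
  have := le_sumn (fun t => size (psi j t)) (HTj s hs); rewrite E /=; lia.
have [h1 h2] := IH j' hj s; split; first by move=> hs; apply: List.in_or_app; right; apply: h1.
lia.
Qed.

Lemma count_mkseq (T1 T2 : Type) (a : pred T1) (b : pred T2) (f : nat -> T1) (l : seq T2) x0 :
  (forall i, i < size l -> a (f i) = b (nth x0 l i)) -> count a (mkseq f (size l)) = count b l.
Proof.
move=> H; rewrite /mkseq count_map -{2}(mkseq_nth x0 l) /mkseq count_map.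
apply: eq_in_count => i; rewrite mem_iota => /andP [_ hi]; apply: H; lia.
Qed.

End Maps.

Lemma In_flatten_map (A T : Type) (f : A -> seq T) l a x :
  List.In a l -> List.In x (f a) -> List.In x (flatten (map f l)).
Proof.
elim: l => //= c l IH [->|H] hx; apply: List.in_or_app; [by left|right; exact: IH].
Qed.

Lemma one_side (S : Type) (G : (S -> S) -> Prop) m n (h : cube S m -> cube S n)
    (b0m : brick S m) (b0n : brick S n) :
  subgroup_sym G -> SV G h ->
  exists (base : seq S) (K : nat), forall csU : seq S, (forall s, List.In s base -> K <= occ csU s) ->
   exists (R : seq (brick S n)) (gams gis : nat -> S -> S),
    [/\ size R = size (gridL m csU),
      (forall i, i < size (gridL m csU) -> [/\ G (gams i), G (gis i), cancel (gams i) (gis i) &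
          maps h (nth b0m (gridL m csU) i) (nth b0n R i) (gams i)]),
      lpart R, lfin R &
      dyadic_partition (fun i : 'I_(size (gridL m csU)) => nth b0n R i)].
Proof.
move=> [_ _ _ HGinv] [hm hn hbij [k [B [B' [gam [HB HB' HGam Hmap]]]]]].
have [gi Hgi] : exists gi : 'I_k -> S -> S, forall l, [/\ G (gi l), cancel (gam l) (gi l) & cancel (gi l) (gam l)].
  by apply: (choice' (P := fun l g' => [/\ G g', cancel (gam l) g' & cancel g' (gam l)])) => l; have [g' [h1 h2 h3]] := HGinv _ (HGam l); exists g'.
have [T' [N' HT']] := fam_bound (psi := fun j => (B' j).2) (fun j => HB'.1 j).
have [TB [NB HTB]] := fam_bound (psi := fun j => (B j).2) (fun j => HB.1 j).
set csV := flatten (nseq N' T').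
set V := gridL n csV.
exists (TB ++ flatten (map (fun l => map (gi l) csV) (enum 'I_k))), (size csV + NB).
move=> csU HcsU; set U := gridL m csU.
have hinj : injective h by apply: bij_inj.
have Vref : forall v, List.In v V -> exists j w, v = relext (B' j) w.
  move=> v hv; have [j hj] := bp_ex (point_of v) HB'.
  exists j; apply: (ex_intro _ _ (Gref hj (in_point v) _)) => s.
  rewrite (grid_size hv); have [h1 h2] := HT' j s.
  case E : ((B' j).2 s) => [|a l] //; rewrite -E.
  have hs : (B' j).2 s <> [::] by rewrite E.
  have := occ_nseq N' (h1 hs); rewrite /csV; lia.
have Uref : forall u, List.In u U -> exists l z, u = relext (B l) z.
  move=> u hu; have [l hl] := bp_ex (point_of u) HB.
  exists l; apply: (ex_intro _ _ (Gref hl (in_point u) _)) => s.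
  rewrite (grid_size hu); have [h1 h2] := HTB l s.
  case E : ((B l).2 s) => [|a l'] //; rewrite -E.
  have hs : (B l).2 s <> [::] by rewrite E.
  have hin : List.In s (TB ++ flatten (map (fun l => map (gi l) csV) (enum 'I_k))).
    by apply: List.in_or_app; left; apply: h1.
  have := HcsU _ hin; lia.
have [l0 _] := bp_ex ((Ordinal hm), fun _ _ => false) HB.
have [LZ HLZ] : exists LZ : nat -> 'I_k * (S -> seq bool),
    forall i, i < size U -> nth b0m U i = relext (B (LZ i).1) (LZ i).2.
  apply: (choice' (P := fun i p => i < size U -> nth b0m U i = relext (B p.1) p.2)) => i.
  case: (ltnP i (size U)) => hi; last by exists (l0, fun _ => [::]) => h'; exfalso; lia.
  by have [l [z e]] := Uref _ (nth_In b0m hi); exists (l, z).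
set L := fun i => (LZ i).1; set Z := fun i => (LZ i).2.
set R := mkseq (fun i => relext (B' (L i)) (fun t => Z i (gi (L i) t))) (size U).
have HRi : forall i, i < size U -> nth b0n R i = relext (B' (L i)) (fun t => Z i (gi (L i) t)).
  by move=> i hi; rewrite nth_mkseq.
have HUi : forall i, i < size U -> nth b0m U i = relext (B (L i)) (Z i) by exact: HLZ.
have Hmaps : forall i, i < size U -> maps h (nth b0m U i) (nth b0n R i) (gam (L i)).
  move=> i hi; rewrite HUi // HRi //; apply: maps_relext; first exact: Hmap.
  by case: (Hgi (L i)).
have HRin : forall r, List.In r R -> exists2 i, i < size U & r = nth b0n R i.
  by move=> r /(In_nth b0n) [i]; rewrite size_mkseq => hi <-; exists i.
have HlpR : lpart R.
  move=> y; have [hinv hh1 hh2] := hbij; rewrite -(hh2 y); set x := hinv y.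
  rewrite /nb /R (count_mkseq (x0 := b0m) (b := fun b => pb (in_brick b x))); first exact: lpart_grid.
  move=> i hi; rewrite -HRi //.
  have [_ c _] := Hgi (L i).
  apply/pbP/pbP; first exact: maps_bwd hinj (Hmaps i hi) x.
  exact: maps_fwd (Hmaps i hi) c x.
have HlfR : lfin R.
  move=> r /HRin [i hi ->]; rewrite HRi //; apply: finsupp_relext; first exact: HB'.1.
  have [Tu HTu] := lfin_grid (nth_In b0m hi).
  have [_ _ c'] := Hgi (L i).
  exists (map (gam (L i)) Tu) => t ht; rewrite -(c' t); apply: List.in_map; apply: HTu.
  rewrite HUi //= => E; apply: ht; move: E; by case: ((B (L i)).2 _).
have HrelRV : Hrel R V.
  move=> r /HRin [i hi ->].
  have [_ c _] := Hgi (L i).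
  set y := h (point_of (nth b0m U i)).
  have hy : in_brick (nth b0n R i) y := maps_fwd (Hmaps i hi) c (in_point _).
  have [v hv hvy] := lpart_ex y (@lpart_grid S n csV).
  have [j [w' ev]] := Vref v hv.
  have ej : j = L i.
    apply: (bp_uniq (x := y) HB'); first by move: hvy; rewrite ev => /in_relext_in.
    by move: hy; rewrite HRi // => /in_relext_in.
  exists v, (fun s => drop (size (v.2 s)) ((nth b0n R i).2 s)); split => //.
  apply: (Gref hvy hy) => t.
  rewrite (grid_size hv) HRi // size_relext.
  have szv : occ csV t = size ((B' (L i)).2 t) + size (w' t) by rewrite -(grid_size hv) ev size_relext ej.
  case: (posnP (occ csV t)) => ho; first lia.
  have hin : List.In (gi (L i) t) (TB ++ flatten (map (fun l => map (gi l) csV) (enum 'I_k))).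
    apply: List.in_or_app; right; apply: (In_flatten_map (a := L i)).
      by apply: In_mem; rewrite mem_enum.
    by apply: List.in_map; apply: occ_In.
  have := HcsU _ hin.
  rewrite -(grid_size (nth_In b0m hi)) HUi // size_relext.
  have := (HTB (L i) (gi (L i) t)).2; have := occ_size csV t; lia.
have HuniRV : Huni R V.
  move=> p r r' w w' hp /HRin [i hi ->] /HRin [i' hi' ->] er er' t.
  have [j [w0 ep]] := Vref p hp.
  have Lj : forall i, i < size U -> forall w, nth b0n R i = relext p w -> L i = j.
    move=> i0 hi0 w1 e1; set y := point_of (nth b0n R i0).
    apply: (bp_uniq (x := y) HB').
      by have := in_point (nth b0n R i0); rewrite -/y HRi // => /in_relext_in.
    have := in_point (nth b0n R i0); rewrite -/y {1}e1 => /in_relext_in.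
    by rewrite ep => /in_relext_in.
  have sz : forall i, i < size U -> forall s, size ((B (L i)).2 s) + size (Z i s) = occ csU s.
    by move=> i0 hi0 s; rewrite -size_relext -HUi // (grid_size (nth_In b0m hi0)).
  have e1 := congr1 (fun b => size (b.2 t)) er; have e2 := congr1 (fun b => size (b.2 t)) er'.
  move: e1 e2; rewrite /= HRi // HRi // !size_relext (Lj i hi w er) (Lj i' hi' w' er').
  have := sz i hi (gi j t); have := sz i' hi' (gi j t); rewrite (Lj i hi w er) (Lj i' hi' w' er').
  lia.
have HsR : size R = size U by rewrite size_mkseq.
have Hd := glue (b0 := b0n) HlpR HlfR (n := size R) (P := V) (leq_addr _ _)
  (And5 (grid_dyadic b0n csV) (@lpart_grid S n csV) (@lfin_grid S n csV) HrelRV HuniRV).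
exists R, (fun i => gam (L i)), (fun i => gi (L i)); split => //.
- move=> i hi; have [g1 g2 g3] := Hgi (L i); split => //; exact: Hmaps.
- apply: (Dstep_gen b0n Hd HlpR HlfR HsR) => j.
  exists (nth b0n R j), (nth b0n R j); split; [exact: nth_In|exact: nth_In|by move=> x; split; [left|case]].
Qed.

Lemma chart S m k (Q : 'I_k -> brick S m) : brick_partition Q ->
  exists f : cube S m -> cube S k, bijective f /\ forall j kap, f ((Q j).1, Phi (Q j).2 kap) = (j, kap).
Proof.
move=> HQ.
have [idx Hidx] : exists idx : cube S m -> 'I_k, forall x, in_brick (Q (idx x)) x.
  by apply: (choice' (P := fun x j => in_brick (Q j) x)) => x; apply: bp_ex.
set f := fun x : cube S m => (idx x, fun s k => x.2 s (k + size ((Q (idx x)).2 s))).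
have Hf : forall j kap, f ((Q j).1, Phi (Q j).2 kap) = (j, kap).
  move=> j kap; rewrite /f /=.
  have -> : idx ((Q j).1, Phi (Q j).2 kap) = j by apply: (bp_uniq HQ (Hidx _)); apply: in_Phi.
  congr pair; apply: functional_extensionality => s; exact: wcat_shift.
exists f; split => //.
exists (fun y => ((Q y.1).1, Phi (Q y.1).2 y.2)).
  move=> x; have [e1 e2] := Hidx x; rewrite /f /=.
  apply: injective_projections => /=; first by rewrite e1.
  by apply: functional_extensionality => s; rewrite /Phi unwcat.
by case=> j kap; rewrite Hf.
Qed.

Lemma initial_bp S m : brick_partition (initial_partition S (m:=m)).
Proof.
split; first by move=> j; exists [::].
move=> x; exists x.1; split; first by split.
by move=> j [/= ->].
Qed.

Lemma same_class_refl S (G : (S -> S) -> Prop) m n (h : cube S m -> cube S n) :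
  G id -> same_class G h h.
Proof.
move=> Gid; exists id; split => //; exists 1%g, (fun _ => id); split => // i kap kap' tw.
rewrite perm1; congr pair; apply: functional_extensionality => s; exact: (esym (tw s)).
Qed.

Lemma ple_of S (G : (S -> S) -> Prop) n (h : cube S 1 -> cube S n) (b0 : brick S 1) (b1 : brick S n)
    (U : seq (brick S 1)) (R : seq (brick S n)) (gams gis : nat -> S -> S)
    (h3 : cube S 1 -> cube S (size U)) :
  subgroup_sym G -> SV G h -> brick_partition (fun i : 'I_(size U) => nth b0 U i) ->
  size R = size U ->
  (forall i, i < size U -> [/\ G (gams i), G (gis i), cancel (gams i) (gis i) &
          maps h (nth b0 U i) (nth b1 R i) (gams i)]) ->
  lpart R -> lfin R -> dyadic_partition (fun i : 'I_(size U) => nth b1 R i) ->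
  (forall (j : 'I_(size U)) kap, h3 ((nth b0 U j).1, Phi (nth b0 U j).2 kap) = (j, kap)) ->
  Ple G h h3.
Proof.
move=> [_ Gid _ _] HSV HBU hsz Hi Hlp Hlf Hd Hh3.
have HBR := Bpart b1 Hlp Hlf hsz.
have [f1 [hbf1 Hf1]] := chart HBR.
exists h, f1; split => //.
- by split => //; exists (fun i : 'I_(size U) => nth b1 R i).
- exact: same_class_refl.
exists (fun y : cube S (size U) => (y.1, fun s => y.2 (gams y.1 s))); split.
  exists 1%g, (fun i => gis i); split.
    by move=> i; have [] := Hi i (ltn_ord i).
  move=> i kap kap' tw; rewrite perm1 /=; congr pair; apply: functional_extensionality => s.
  have [_ _ c _] := Hi i (ltn_ord i); rewrite perm1 in tw; by rewrite -tw c.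
move=> x; have [j hj] := bp_ex x HBU.
have [kap ex] := (proj1 (in_brick_Phi _ _) hj); rewrite ex Hh3 /=.
have [_ _ c Hm] := Hi j (ltn_ord j).
rewrite (Hm kap (fun t => kap (gis j t))); last by move=> s; rewrite /= c.
rewrite Hf1 /=; congr pair; apply: functional_extensionality => s; by rewrite c.
Qed.

Theorem proposition5p2 (S : Type) (G : (S -> S) -> Prop)
    (HS : inhabited S) (HG : subgroup_sym G)
    (n1 n2 : nat) (h1 : cube S 1 -> cube S n1) (h2 : cube S 1 -> cube S n2) :
  SV G h1 -> SV G h2 ->
  exists (n3 : nat) (h3 : cube S 1 -> cube S n3),
    [/\ SV G h3, Ple G h1 h3 & Ple G h2 h3].
Proof.
move=> H1 H2.
set b0 : brick S 1 := (ord0, fun _ => [::]).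
have hn1 : 0 < n1 by case: H1.
have hn2 : 0 < n2 by case: H2.
set c1 : brick S n1 := (Ordinal hn1, fun _ => [::]).
set c2 : brick S n2 := (Ordinal hn2, fun _ => [::]).
have [base1 [K1 P1]] := one_side b0 c1 HG H1.
have [base2 [K2 P2]] := one_side b0 c2 HG H2.
set csU := flatten (nseq (K1 + K2) (base1 ++ base2)).
have hc1 : forall s, List.In s base1 -> K1 <= occ csU s.
  move=> s hs; have hs' : List.In s (base1 ++ base2) by apply: List.in_or_app; left.
  have := occ_nseq (K1 + K2) hs'; rewrite /csU; lia.
have hc2 : forall s, List.In s base2 -> K2 <= occ csU s.
  move=> s hs; have hs' : List.In s (base1 ++ base2) by apply: List.in_or_app; right.
  have := occ_nseq (K1 + K2) hs'; rewrite /csU; lia.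
have [R1 [gams1 [gis1 [hsz1 Hi1 Hlp1 Hlf1 Hd1]]]] := P1 csU hc1.
have [R2 [gams2 [gis2 [hsz2 Hi2 Hlp2 Hlf2 Hd2]]]] := P2 csU hc2.
set U := gridL 1 csU.
have HBU : brick_partition (fun i : 'I_(size U) => nth b0 U i) :=
  Bpart b0 (@lpart_grid S 1 csU) (@lfin_grid S 1 csU) (erefl _).
have [h3 [hb3 Hh3]] := chart HBU.
exists (size U), h3; split.
- split => //.
    have [b hb _] := lpart_ex (point_of b0) (@lpart_grid S 1 csU).
    have [i hi _] := In_nth b0 hb; rewrite /U; lia.
  exists (size U), (fun i : 'I_(size U) => nth b0 U i), (initial_partition S (m:=size U)), (fun _ => id).
  split => //; first exact: initial_bp.
    by case: HG.
  move=> j kap kap' tw; rewrite Hh3 /=; congr pair.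
  apply: functional_extensionality => s; by rewrite /Phi wcat_nil tw.
- exact: (ple_of HG H1 HBU hsz1 Hi1 Hlp1 Hlf1 Hd1 Hh3).
- exact: (ple_of HG H2 HBU hsz2 Hi2 Hlp2 Hlf2 Hd2 Hh3).
Qed.
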